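(* Let $d,T\ge 1$, let $0<b<c$, and let $x_1,\dots,x_T\in\mathbb{R}^d$, $y_1,\dots,y_T\in\mathbb{R}$ satisfy $\|x_t\|^2\le X^2$ and $|y_t|\le Y$ for all $t$, for some $X>0$, $Y\ge 0$. Let $\hat y_t$ be the LASER predictions and $D_t$ the LASER matrices (defined in the context), and write $L_T(\mathrm{LASER})=\sum_{t=1}^T(y_t-\hat y_t)^2$. Then for every sequence $u_1,\dots,u_T\in\mathbb{R}^d$, with $V=\sum_{t=1}^{T-1}\|u_t-u_{t+1}\|^2$ and $L_T(\{u_t\})=\sum_{t=1}^T (x_t^\top u_t-y_t)^2$, \[ L_T(\mathrm{LASER}) \le b\|u_1\|^2 + L_T(\{u_t\}) + Y^2\ln\Big|\tfrac{1}{b}D_T\Big| + c^{-1}Y^2\,\mathrm{Tr}(D_0) + cV + c^{-1}Y^2Td\,\max\Big\{\tfrac{3X^2+\sqrt{X^4+4X^2c}}{2},\; b+X^2\Big\}. \] Furthermore, suppose $b=\varepsilon c$ for some $0<\varepsilon<1$, and let $\mu=\max\big\{\tfrac{9}{8}X^2,\ \tfrac{(b+X^2)^2}{8X^2}\big\}$. If $V>0$, $V\le T\,\frac{\sqrt2\,Y^2dX}{\mu^{3/2}}$, and $c=\big(\sqrt2\,TY^2dX/V\big)^{2/3}$, then \[ L_T(\mathrm{LASER}) \le b\|u_1\|^2 + 3\big(\sqrt2\,Y^2dX\big)^{2/3}T^{2/3}V^{1/3} + \frac{\varepsilon}{1-\varepsilon}Y^2d + L_T(\{u_t\}) + Y^2\ln\Big|\tfrac1b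 D_T\Big|. \]
   Context: LASER algorithm: with parameters $0<b<c$, set $D_0=\frac{bc}{c-b}I\in\mathbb{R}^{d\times d}$ and $e_0=0\in\mathbb{R}^d$. For $t=1,\dots,T$: compute $D_t=\big(D_{t-1}^{-1}+c^{-1}I\big)^{-1}+x_tx_t^\top$; predict $\hat y_t = x_t^\top D_t^{-1}\big(I+c^{-1}D_{t-1}\big)^{-1}e_{t-1}$; then set $e_t=\big(I+c^{-1}D_{t-1}\big)^{-1}e_{t-1}+y_tx_t$. $|A|$ denotes the determinant of a matrix $A$, $\mathrm{Tr}$ the trace, $I$ the $d\times d$ identity. *)

(* Defs.v *)
From HB Require Import structures.
From mathcomp Require Import all_boot all_order all_algebra.
From mathcomp Require Import all_classical all_reals all_analysis.
Set Implicit Arguments. Unset Strict Implicit. Unset Printing Implicit Defensive.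
Import Order.TTheory GRing.Theory Num.Theory.
Local Open Scope ring_scope.

Section Laser.
Variables (R : realType) (d : nat) (b c : R).
Variables (x : nat -> 'cV[R]_d) (y : nat -> R).

Definition sqnorm2 (v : 'cV[R]_d) : R := \sum_(i < d) (v i 0) ^+ 2.

Definition D0 : 'M[R]_d := (b * c / (c - b))%:M.

Definition shrink (D : 'M[R]_d) : 'M[R]_d := invmx (1%:M + c^-1 *: D).

(* laser_state t = (D_t, e_t); inputs indexed x_1..x_T, y_1..y_T *)
Fixpoint laser_state (t : nat) : 'M[R]_d * 'cV[R]_d :=
  match t with
  | 0 => (D0, 0)
  | t'.+1 =>
      let (Dp, ep) := laser_state t' in
      (invmx (invmx Dp + c^-1%:M) + x t'.+1 *m (x t'.+1)^T,
       shrink Dp *m ep + y t'.+1 *: x t'.+1)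
  end.

Definition laserD (t : nat) : 'M[R]_d := (laser_state t).1.
Definition lasere (t : nat) : 'cV[R]_d := (laser_state t).2.

(* prediction at time t >= 1 *)
Definition laser_pred (t : nat) : R :=
  ((x t)^T *m invmx (laserD t) *m shrink (laserD t.-1) *m lasere t.-1) 0 0.

Definition laser_loss (T : nat) : R :=
  \sum_(1 <= t < T.+1) (y t - laser_pred t) ^+ 2.

End Laser.

Definition seq_loss (R : realType) (d : nat) (x u : nat -> 'cV[R]_d)
  (y : nat -> R) (T : nat) : R :=
  \sum_(1 <= t < T.+1) (((x t)^T *m u t) 0 0 - y t) ^+ 2.

Definition path_variation (R : realType) (d : nat) (u : nat -> 'cV[R]_d) (T : nat) : R :=
  \sum_(1 <= t < T) sqnorm2 (u t - u t.+1).

(* Main.v *)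
Require Import Defs.
From HB Require Import structures.
From mathcomp Require Import all_boot all_order all_algebra.
From mathcomp Require Import all_classical all_reals all_analysis.
From mathcomp Require Import ring lra.
Import Order.TTheory GRing.Theory Num.Theory.
Local Open Scope ring_scope.

Module LaserProof.
Set Implicit Arguments. Unset Strict Implicit. Unset Printing Implicit Defensive.

Section LinAlg.
Variable R : realFieldType.

Definition dot n (u v : 'cV[R]_n) : R := \sum_i u i 0 * v i 0.
Definition symm n (A : 'M[R]_n) := A^T = A.
Definition posdef n (A : 'M[R]_n) := forall v, v != 0 -> 0 < dot v (A *m v).

Lemma dotC n (u v : 'cV[R]_n) : dot u v = dot v u.
Proof. by apply: eq_bigr => i _; rewrite mulrC. Qed.
Lemma dotDl n (u v w : 'cV[R]_n) : dot (u + v) w = dot u w + dot v w.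
Proof. by rewrite /dot -big_split; apply: eq_bigr => i _; rewrite !mxE mulrDl. Qed.
Lemma dotDr n (u v w : 'cV[R]_n) : dot w (u + v) = dot w u + dot w v.
Proof. by rewrite dotC dotDl !(dotC w). Qed.
Lemma dotZl n a (u w : 'cV[R]_n) : dot (a *: u) w = a * dot u w.
Proof. by rewrite /dot mulr_sumr; apply: eq_bigr => i _; rewrite !mxE mulrA. Qed.
Lemma dotZr n a (u w : 'cV[R]_n) : dot w (a *: u) = a * dot w u.
Proof. by rewrite dotC dotZl dotC. Qed.
Lemma dotNl n (u w : 'cV[R]_n) : dot (- u) w = - dot u w.
Proof. by rewrite -scaleN1r dotZl mulN1r. Qed.
Lemma dotNr n (u w : 'cV[R]_n) : dot w (- u) = - dot w u.
Proof. by rewrite dotC dotNl dotC. Qed.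
Lemma dotBl n (u v w : 'cV[R]_n) : dot (u - v) w = dot u w - dot v w.
Proof. by rewrite dotDl dotNl. Qed.
Lemma dotBr n (u v w : 'cV[R]_n) : dot w (u - v) = dot w u - dot w v.
Proof. by rewrite dotDr dotNr. Qed.
Lemma dot0r n (u : 'cV[R]_n) : dot u 0 = 0.
Proof. by rewrite /dot big1 // => i _; rewrite mxE mulr0. Qed.
Lemma dot0l n (u : 'cV[R]_n) : dot 0 u = 0.
Proof. by rewrite dotC dot0r. Qed.
Lemma dot_ge0 n (u : 'cV[R]_n) : 0 <= dot u u.
Proof. by apply: sumr_ge0 => i _; rewrite -expr2 sqr_ge0. Qed.
Lemma dot_gt0 n (u : 'cV[R]_n) : u != 0 -> 0 < dot u u.
Proof.
move=> nz; rewrite lt_def dot_ge0 andbT; apply: contra nz => /eqP.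
rewrite /dot => /psumr_eq0P H; apply/eqP/matrixP => i j.
rewrite (ord1 j) mxE; apply/eqP; rewrite -sqrf_eq0 expr2 H //.
by move=> k _; rewrite -expr2 sqr_ge0.
Qed.
Lemma dot_mx n (u v : 'cV[R]_n) : (u^T *m v) 0 0 = dot u v.
Proof. by rewrite mxE; apply: eq_bigr => i _; rewrite mxE. Qed.
Lemma dot_mulmx n (A : 'M[R]_n) (u v : 'cV[R]_n) :
  dot u (A *m v) = dot (A^T *m u) v.
Proof. by rewrite -!dot_mx trmx_mul trmxK mulmxA. Qed.
Lemma dot_sym n (A : 'M[R]_n) (u v : 'cV[R]_n) : symm A ->
  dot (A *m u) v = dot u (A *m v).
Proof. by move=> sA; rewrite dot_mulmx sA. Qed.
Lemma rank1_mul n (a v : 'cV[R]_n) : (a *m a^T) *m v = dot a v *: a.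
Proof.
rewrite -mulmxA -dot_mx; apply/matrixP => i j; rewrite (ord1 j).
by rewrite mxE big_ord1 [RHS]mxE mulrC.
Qed.

Lemma psd n (A : 'M[R]_n) : posdef A -> forall v, 0 <= dot v (A *m v).
Proof.
move=> pA v; have [->|nz] := eqVneq v 0; first by rewrite dot0l.
exact: ltW (pA _ nz).
Qed.

Lemma dot1 (w : 'cV[R]_1) : dot 1%:M w = w 0 0.
Proof. by rewrite /dot big_ord1 mxE mul1r. Qed.

Lemma dot_col n1 n2 (a1 b1 : 'cV[R]_n1) (a2 b2 : 'cV[R]_n2) :
  dot (col_mx a1 a2) (col_mx b1 b2) = dot a1 b1 + dot a2 b2.
Proof.
rewrite /dot big_split_ord /=; congr (_ + _); apply: eq_bigr => i _.
  by rewrite !col_mxEu.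
by rewrite !col_mxEd.
Qed.

Lemma det_schur n (al : 'M[R]_1) (be : 'rV[R]_n) (ga : 'cV[R]_n) (C : 'M[R]_n) :
  C \in unitmx ->
  \det (block_mx al be ga C) = \det C * (al 0 0 - (be *m invmx C *m ga) 0 0).
Proof.
move=> uC.
set s := al 0 0 - _.
have -> : block_mx al be ga C =
   block_mx 1%:M (be *m invmx C) 0 1%:M *m block_mx s%:M 0 ga C.
  rewrite mulmx_block !mul1mx !mulmx0 !mul0mx !add0r ?addr0 mulmxKV //.
  congr block_mx; apply/matrixP => i j; rewrite !ord1 [RHS]mxE [s%:M _ _]mxE /=.
  by rewrite mulr1n /s subrK.
rewrite (@det_mulmx _ (1 + n)).
by rewrite det_ublock det_lblock det_scalar1 !det_scalar !expr1n !mul1r ?mulr1 mulrC.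
Qed.

Lemma det_schur1 n (be : 'rV[R]_n) (ga : 'cV[R]_n) (C : 'M[R]_n) :
  \det (block_mx 1%:M be ga C) = \det (C - ga *m be).
Proof.
have -> : block_mx 1%:M be ga C =
   block_mx 1%:M 0 ga 1%:M *m block_mx 1%:M be 0 (C - ga *m be).
  rewrite mulmx_block !mul1mx !mulmx0 !mul0mx ?add0r ?addr0 mulmx1.
  by rewrite addrC subrK.
rewrite det_mulmx. by rewrite det_ublock det_lblock !det_scalar !expr1n !mul1r.
Qed.

Lemma hadamard n (N : 'M[R]_n) : symm N -> posdef N ->
  0 < \det N /\ \det N <= \prod_i N i i.
Proof.
elim: n N => [|n IH] N sN pN.
  by rewrite det_mx00 big_ord0 ltr01 lexx.
have NE := @submxK R 1 n 1 n N.
set al := ulsubmx _ in NE; set be := ursubmx _ in NE.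
set ga := dlsubmx _ in NE; set C := drsubmx _ in NE.
have sNb : (block_mx al be ga C)^T = block_mx al be ga C by rewrite NE sN.
rewrite tr_block_mx in sNb; case/eq_block_mx: sNb => _ gaE _ sC.
have pC : posdef C.
  move=> v nz.
  have nz' : @col_mx _ 1 n 1 0 v != 0 by rewrite col_mx_eq0 eqxx nz.
  have := pN _ nz'.
  rewrite -NE (mul_block_col al be ga C 0 v) !mulmx0 !add0r.
  rewrite (@dot_col 1 n 0 _ v) dot0l add0r.
  by [].
have [dC1 dC2] := IH C sC pC.
have uC : C \in unitmx by rewrite unitmxE unitfE gt_eqF.
set k := invmx C *m ga.
have Ck : C *m k = ga by rewrite mulKVmx.
have bk : (be *m invmx C *m ga) 0 0 = dot ga k.
  by rewrite -mulmxA -gaE dot_mx.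
have kC : 0 <= dot ga k by rewrite -Ck dot_sym // psd.
have spos : 0 < al 0 0 - dot ga k.
  have nz' : @col_mx _ 1 n 1 1%:M (- k) != 0.
    rewrite col_mx_eq0 negb_and; apply/orP; left; apply/eqP => /matrixP /(_ 0 0).
    by rewrite !mxE /= => /eqP; rewrite oner_eq0.
  have := pN _ nz'.
  rewrite -NE (mul_block_col al be ga C 1%:M (-k)) (@dot_col 1 n 1%:M _ (-k)).
  rewrite !mulmx1 !mulmxN Ck subrr dot0r addr0 dot1 -gaE.
  by rewrite -dot_mx !mxE.
have dE := det_schur al be ga uC.
rewrite NE in dE; rewrite dE bk; split; first exact: mulr_gt0.
rewrite (@big_split_ord _ _ _ 1 n) /= big_ord1 mulrC.
rewrite -NE (block_mxEul al be ga C).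
under eq_bigr => i _ do rewrite (block_mxEdr al be ga C).
apply: ler_pM => //; [exact: ltW | exact: ltW | lra].
Qed.

Lemma pd_unit n (A : 'M[R]_n) : symm A -> posdef A -> A \in unitmx.
Proof. by move=> sA pA; rewrite unitmxE unitfE gt_eqF //; case: (hadamard sA pA). Qed.

Lemma symm_inv n (A : 'M[R]_n) : symm A -> symm (invmx A).
Proof. by move=> sA; rewrite /symm trmx_inv sA. Qed.

Lemma scalemxAl' m p q (a : R) (A : 'M[R]_(m, p)) (B : 'M[R]_(p, q)) :
  (a *: A) *m B = a *: (A *m B).
Proof. by rewrite scalemxAl. Qed.
Lemma scalemxAr' m p q (a : R) (A : 'M[R]_(m, p)) (B : 'M[R]_(p, q)) :
  A *m (a *: B) = a *: (A *m B).
Proof. by rewrite scalemxAr. Qed.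

Ltac dexp := rewrite ?(mulmxDl, mulmxDr, mulmxBl, mulmxBr, mulmxN, mulNmx,
  scalemxAl', scalemxAr', mul_scalar_mx, mul_mx_scalar, mul1mx, mulmx1,
  dotDl, dotDr, dotBl, dotBr, dotNl, dotNr, dotZl, dotZr).

Lemma variational n (P : 'M[R]_n) v w : symm P -> posdef P ->
  2 * dot w v - dot w (P *m w) <= dot v (invmx P *m v).
Proof.
move=> sP pP; have uP := pd_unit sP pP.
set k := invmx P *m v; have vE : v = P *m k by rewrite mulKVmx.
have := psd pP (w - k); rewrite vE; dexp.
rewrite -(dot_sym k w sP) (dotC (P *m k) w) (dotC (P *m k) k). lra.
Qed.

Section Step.
Variables (n : nat) (c : R) (D : 'M[R]_n).
Hypotheses (c0 : 0 < c) (sD : symm D) (pD : posdef D).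
Let K := D + c%:M.
Let Ki := invmx K.
Definition Am := c *: 1%:M - c ^+ 2 *: invmx (D + c%:M).

Lemma K_sym : symm K.
Proof. by rewrite /symm /K linearD /= sD tr_scalar_mx. Qed.
Lemma K_pd : posdef K.
Proof.
move=> v nz; rewrite /K; dexp; have := pD nz; have := dot_gt0 nz.
by move=> h1 h2; apply: addr_gt0 => //; apply: mulr_gt0.
Qed.
Lemma K_unit : K \in unitmx. Proof. exact: pd_unit K_sym K_pd. Qed.
Lemma KiD : Ki *m D = 1%:M - c *: Ki.
Proof.
have : Ki *m K = 1%:M by rewrite mulVmx // K_unit.
rewrite /K mulmxDr mul_mx_scalar => <-; by rewrite addrK.
Qed.
Lemma Am_alt : Am = c *: (Ki *m D).
Proof. by rewrite KiD /Am scalerBr scalerA -expr2 -scalemx1. Qed.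
Lemma Aform : invmx (invmx D + c^-1%:M) = Am.
Proof.
have uD := pd_unit sD pD.
have H : Am *m (invmx D + c^-1%:M) = 1%:M.
  rewrite Am_alt mulmxDr -!scalemxAl -mulmxA mulmxV // mulmx1 mul_mx_scalar.
  rewrite scalerA mulrC mulVf ?gt_eqF // scale1r KiD.
  by rewrite addrC subrK.
have [u1 u2] := mulmx1_unit H.
by rewrite -[RHS]mulmx1 -(mulmxV u2) mulmxA H mul1mx.
Qed.
Lemma shrink_form : invmx (1%:M + c^-1 *: D) = c *: Ki.
Proof.
have -> : 1%:M + c^-1 *: D = c^-1 *: K.
  by rewrite /K scalerDr scale_scalar_mx mulVf ?gt_eqF // addrC.
rewrite invmxZ ?invrK //.
by rewrite unitmxZ ?K_unit // unitfE invr_eq0 gt_eqF.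
Qed.
Lemma Am_sym : symm Am.
Proof.
rewrite /symm /Am linearB /= !linearZ /= tr_scalar_mx.
by rewrite (symm_inv K_sym).
Qed.
Lemma AmK (k : 'cV[R]_n) : Am *m (K *m k) = c *: (K *m k) - c ^+ 2 *: k.
Proof. by rewrite /Am mulmxBl -!scalemxAl mul1mx mulmxA mulVmx ?K_unit // mul1mx. Qed.
Lemma KE (k : 'cV[R]_n) : K *m k = D *m k + c *: k.
Proof. by rewrite /K mulmxDl mul_scalar_mx. Qed.
Lemma Am_quad (k : 'cV[R]_n) : dot (K *m k) (Am *m (K *m k)) =
   c * dot (D *m k) (D *m k) + c ^+ 2 * dot k (D *m k).
Proof.
rewrite AmK KE; dexp. rewrite (dotC (D *m k) k). ring.
Qed.
Lemma Am_pd : posdef Am.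
Proof.
move=> v nz; set k := Ki *m v.
have vE : v = K *m k by rewrite mulKVmx ?K_unit.
have knz : k != 0 by apply: contra nz => /eqP k0; rewrite vE k0 mulmx0.
rewrite vE Am_quad; apply: ltr_pwDr; first by apply: mulr_gt0; [exact: exprn_gt0|exact: pD].
by apply: mulr_ge0; [exact: ltW|exact: dot_ge0].
Qed.
Lemma infconv (p q : 'cV[R]_n) :
  dot q (Am *m q) <= dot p (D *m p) + c * dot (p - q) (p - q).
Proof.
set k := Ki *m q.
have qE : q = K *m k by rewrite mulKVmx ?K_unit.
clearbody k; rewrite qE Am_quad; have := psd K_pd (p - c *: k); rewrite !KE; dexp.
rewrite -(dot_sym k p sD) !(dotC (D *m k) p) !(dotC k p) (dotC (D *m k) k).
move=> H; rewrite -subr_ge0; apply: (le_trans H); rewrite le_eqVlt; apply/orP; left.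
apply/eqP; ring.
Qed.
Lemma Am_le (M : R) : 0 < M -> (forall v, dot v (D *m v) <= M * dot v v) ->
  forall v, dot v (Am *m v) <= c * M / (M + c) * dot v v.
Proof.
move=> M0 HM v.
set s := (M + c)^-1.
have s0 : 0 < s by rewrite /s invr_gt0 addr_gt0.
have Mc0 : M + c != 0 by rewrite gt_eqF // addr_gt0.
have V := @variational n K v (s *: v) K_sym K_pd.
have h1 : dot (s *: v) (K *m (s *: v)) = s ^+ 2 * (dot v (D *m v) + c * dot v v).
  rewrite /K; dexp; ring.
have h2 : s ^+ 2 * (dot v (D *m v) + c * dot v v) <= s * dot v v.
  have -> : s * dot v v = s ^+ 2 * ((M + c) * dot v v).
    by rewrite /s; field.
  apply: ler_wpM2l; first exact: sqr_ge0.
  have := HM v; lra.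
have h3 : s * dot v v <= dot v (Ki *m v).
  move: V; rewrite h1 dotZl; lra.
have -> : Am *m v = c *: v - c ^+ 2 *: (Ki *m v).
  by rewrite /Am mulmxBl -!scalemxAl mul1mx.
rewrite dotBr !dotZr.
have -> : c * M / (M + c) * dot v v = c * dot v v - c ^+ 2 * (s * dot v v).
  by rewrite /s; field.
rewrite lerD2l lerN2; apply: ler_wpM2l => //; exact: sqr_ge0.
Qed.
End Step.

Lemma pred_step n (A B : 'M[R]_n) (a mu E : 'cV[R]_n) (yy : R) :
  symm A -> posdef A -> symm (A + a *m a^T) -> posdef (A + a *m a^T) ->
  B = invmx (A + a *m a^T) -> E = A *m mu + yy *: a ->
  (yy - dot a (B *m (A *m mu))) ^+ 2 <=
    dot mu (A *m mu) + yy ^+ 2 - dot E (B *m E) + yy ^+ 2 * dot a (B *m a).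
Proof.
move=> sA pA sDt pDt BE EE.
have sB : symm B by rewrite BE; exact: symm_inv sDt.
have uDt := pd_unit sDt pDt.
set g := A *m mu; set k := B *m g.
have gE : g = (A + a *m a^T) *m k by rewrite /k BE mulKVmx.
have gE2 : g = A *m k + dot a k *: a by rewrite gE mulmxDl rank1_mul.
have H := psd pA (mu - k); move: H; dexp.
have e1 : dot k (A *m mu) = dot k (A *m k) + dot a k * dot a k.
  by rewrite -/g gE2 dotDr dotZr (dotC k a).
have e2 : dot mu (A *m k) = dot k (A *m mu) by rewrite -(dot_sym mu k sA) dotC.
have e3 : dot E (B *m E) = dot k (A *m k) + dot a k * dot a k
   + 2 * yy * dot a k + yy ^+ 2 * dot a (B *m a).
  rewrite EE -/g; dexp. rewrite -/k (dotC g k) {1}gE2 dotDr dotZr (dotC k a).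
  rewrite -(dot_sym g a sB) -/k (dotC k a). ring.
rewrite e3 e2 e1 -/g -/k. nra.
Qed.

Lemma det_rank1 n (A : 'M[R]_n) (a : 'cV[R]_n) :
  (A + a *m a^T) \in unitmx ->
  \det A = \det (A + a *m a^T) * (1 - dot a (invmx (A + a *m a^T) *m a)).
Proof.
move=> u.
have := det_schur 1%:M a^T a u; rewrite det_schur1 addrK => ->.
by rewrite mxE -dot_mx mulmxA.
Qed.

Lemma gen_S2 n (A : 'M[R]_n) (a mu w E : 'cV[R]_n) (yy m : R) :
  symm A -> symm (A + a *m a^T) -> (A + a *m a^T) \in unitmx ->
  E = A *m mu + yy *: a ->
  let B := invmx (A + a *m a^T) in
  dot (w - B *m E) ((A + a *m a^T) *m (w - B *m E)) +
    (m + dot mu (A *m mu) + yy ^+ 2 - dot E (B *m E)) =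
  dot (w - mu) (A *m (w - mu)) + m + (yy - dot a w) ^+ 2.
Proof.
move=> sA sDt u EE B.
have h1 : (A + a *m a^T) *m (B *m E) = E by rewrite /B mulKVmx.
rewrite mulmxBr h1 !dotBl !dotBr -(dot_sym (B *m E) w sDt) h1 (dotC (B *m E) E).
rewrite (dotC E w) mulmxDl rank1_mul dotDr dotZr EE; dexp.
rewrite -(dot_sym mu w sA) !(dotC (A *m mu) w) !(dotC w a). ring.
Qed.

Lemma inv_psd n (Dt : 'M[R]_n) v : symm Dt -> posdef Dt ->
  0 <= dot v (invmx Dt *m v).
Proof.
move=> s p; have u := pd_unit s p; set k := invmx Dt *m v.
have vE : v = Dt *m k by rewrite /k mulKVmx.
clearbody k; subst v.
by rewrite dotC psd.
Qed.

Lemma cauchy_schwarz n (a v : 'cV[R]_n) : dot a v ^+ 2 <= dot a a * dot v v.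
Proof.
have [a0|anz] := eqVneq a 0.
  by rewrite a0 !dot0l expr0n /= mul0r.
have s0 := dot_gt0 anz.
have := dot_ge0 (dot a a *: v - dot a v *: a); dexp.
rewrite (dotC v a).
move=> H.
have : 0 <= dot a a * (dot a a * dot v v - dot a v ^+ 2).
  apply: (le_trans H); rewrite le_eqVlt; apply/orP; left; apply/eqP; ring.
rewrite pmulr_rge0 // subr_ge0 //.
Qed.

Lemma dot_delta n (i : 'I_n) (v : 'cV[R]_n) : dot (delta_mx i 0) v = v i 0.
Proof.
rewrite /dot (bigD1 i) //= big1 ?addr0; first by rewrite mxE (eq_refl i) (eq_refl (0 : 'I_1)) mul1r.
by move=> j ji; rewrite mxE (negbTE ji) mul0r.
Qed.

Lemma trace_le n (D : 'M[R]_n) (M : R) : (forall v, dot v (D *m v) <= M * dot v v) ->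
  \tr D <= M * n%:R.
Proof.
move=> H; rewrite /mxtrace.
have -> : M * n%:R = \sum_(i < n) M by rewrite sumr_const card_ord mulr_natr.
apply: ler_sum => i _; have := H (delta_mx i 0).
by rewrite -colE !dot_delta !mxE (eq_refl i) (eq_refl (0 : 'I_1)) mulr1.
Qed.

End LinAlg.


Section Laser.
Variables (R : realType) (d : nat) (b c : R) (x : nat -> 'cV[R]_d) (y : nat -> R).
Hypotheses (b0 : 0 < b) (bc : b < c).

Let c0 : 0 < c. Proof. exact: lt_trans bc. Qed.
Let Dm t := laserD b c x y t.
Let Em t := lasere b c x y t.
Let Ad t := Am c (Dm t).
Let mu t := invmx (Dm t) *m Em t.

Lemma sqnorm_dot (v : 'cV[R]_d) : sqnorm2 v = dot v v.
Proof. by apply: eq_bigr => i _; rewrite expr2. Qed.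

Lemma Dm_S t : Dm t.+1 = invmx (invmx (Dm t) + c^-1%:M) + x t.+1 *m (x t.+1)^T.
Proof. by rewrite /Dm /laserD /=; case: (laser_state b c x y t). Qed.
Lemma Em_S t : Em t.+1 = shrink c (Dm t) *m Em t + y t.+1 *: x t.+1.
Proof. by rewrite /Em /Dm /lasere /laserD /=; case: (laser_state b c x y t). Qed.

Let delta := b * c / (c - b).
Let delta0 : 0 < delta.
Proof. by rewrite /delta divr_gt0 ?mulr_gt0 // subr_gt0. Qed.

Lemma Dm_inv t : symm (Dm t) /\ posdef (Dm t).
Proof.
elim: t => [|t [sD pD]].
  rewrite /Dm /laserD /= /D0; split; first by rewrite /symm tr_scalar_mx.
  by move=> v nz; rewrite mul_scalar_mx dotZr mulr_gt0 // dot_gt0.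
rewrite Dm_S Aform //; split.
  rewrite /symm linearD /= trmx_mul trmxK.
  by have := Am_sym c sD; rewrite /symm => ->.
move=> v nz; rewrite mulmxDl rank1_mul dotDr dotZr (dotC v (x t.+1)).
apply: ltr_pwDl; [exact: Am_pd | exact: sqr_ge0 ].
Qed.

Lemma Dm_S' t : Dm t.+1 = Ad t + x t.+1 *m (x t.+1)^T.
Proof. by have [sD pD] := Dm_inv t; rewrite Dm_S Aform. Qed.

Lemma Ad_sym t : symm (Ad t). Proof. by have [sD pD] := Dm_inv t; exact: Am_sym. Qed.
Lemma Ad_pd t : posdef (Ad t). Proof. by have [sD pD] := Dm_inv t; exact: Am_pd. Qed.

Lemma shrinkE t : shrink c (Dm t) *m Em t = Ad t *m mu t.
Proof.
have [sD pD] := Dm_inv t.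
rewrite /shrink shrink_form // /Ad Am_alt // /mu -!scalemxAl.
by rewrite -!mulmxA (mulmxA (Dm t)) mulmxV ?pd_unit // mul1mx.
Qed.

Lemma Em_S' t : Em t.+1 = Ad t *m mu t + y t.+1 *: x t.+1.
Proof. by rewrite Em_S shrinkE. Qed.

Lemma pred_S t : laser_pred b c x y t.+1 =
  dot (x t.+1) (invmx (Dm t.+1) *m (Ad t *m mu t)).
Proof.
by rewrite /laser_pred /= -/(Dm t.+1) -/(Dm t) -/(Em t) -dot_mx -!mulmxA shrinkE.
Qed.

Fixpoint mval t := if t is t'.+1 then
  mval t' + dot (mu t') (Ad t' *m mu t') + y t'.+1 ^+ 2
    - dot (Em t'.+1) (invmx (Dm t'.+1) *m Em t'.+1) else 0.

Lemma step_ineq t : (y t.+1 - laser_pred b c x y t.+1) ^+ 2 <=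
  mval t.+1 - mval t + y t.+1 ^+ 2 * dot (x t.+1) (invmx (Dm t.+1) *m x t.+1).
Proof.
have [sD pD] := Dm_inv t.+1.
have E1 := Dm_S' t.
have H := @pred_step _ _ (Ad t) (invmx (Dm t.+1)) (x t.+1) (mu t)
  (Em t.+1) (y t.+1) (Ad_sym t) (Ad_pd t).
rewrite -E1 in H; have {}H := H sD pD erefl (Em_S' t).
rewrite pred_S /=. lra.
Qed.

Let Gv t w := dot (w - mu t) (Dm t *m (w - mu t)) + mval t.

Lemma Gv_S t w : Gv t.+1 w =
  dot (w - mu t) (Ad t *m (w - mu t)) + mval t + (y t.+1 - dot (x t.+1) w) ^+ 2.
Proof.
have [sD pD] := Dm_inv t.+1.
have := @gen_S2 _ _ (Ad t) (x t.+1) (mu t) w (Em t.+1) (y t.+1) (mval t)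
  (Ad_sym t) _ _ (Em_S' t).
rewrite -Dm_S' => /(_ sD (pd_unit sD pD)) /= <-.
by rewrite /Gv /mu /=; ring.
Qed.

Lemma Ad0 : Ad 0 = b%:M.
Proof.
rewrite /Ad /Am /Dm /laserD /= /D0 -raddfD /= invmx_scalar.
rewrite -/delta !scale_scalar_mx -(raddfB (@scalar_mx R d)); congr (_%:M).
have cb : c - b != 0 by rewrite gt_eqF // subr_gt0.
have dc : delta + c != 0 by rewrite gt_eqF // addr_gt0.
move: dc; rewrite /delta => dc; field => //.
rewrite cb /= (_ : b * c + c * (c - b) = c ^+ 2); last by ring.
by rewrite gt_eqF // exprn_gt0.
Qed.

Lemma mu0 : mu 0 = 0.
Proof. by rewrite /mu /Em /lasere /= mulmx0. Qed.

Lemma Gv_le t w z : Gv t.+1 w <=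
  Gv t z + c * dot (z - w) (z - w) + (y t.+1 - dot (x t.+1) w) ^+ 2.
Proof.
have [sD pD] := Dm_inv t.
have := infconv c0 sD pD (z - mu t) (w - mu t).
rewrite (_ : z - mu t - (w - mu t) = z - w); last by rewrite opprB addrA subrK.
rewrite Gv_S /Gv -/(Ad t) => H. lra.
Qed.

Lemma Gv1 w : Gv 1 w = b * dot w w + (y 1 - dot (x 1) w) ^+ 2.
Proof. by rewrite Gv_S Ad0 mu0 subr0 mul_scalar_mx dotZr /= addr0. Qed.

Lemma chain (u : nat -> 'cV[R]_d) n : Gv n.+1 (u n.+1) <=
  b * dot (u 1%N) (u 1%N) + \sum_(i < n.+1) (y i.+1 - dot (x i.+1) (u i.+1)) ^+ 2
  + c * \sum_(i < n) dot (u i.+1 - u i.+2) (u i.+1 - u i.+2).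
Proof.
elim: n => [|n IH].
  by rewrite Gv1 big_ord1 big_ord0 mulr0 addr0.
apply: (le_trans (Gv_le _ _ (u n.+1))).
rewrite big_ord_recr [X in _ <= _ + _ + c * X]big_ord_recr /=.
move: IH; set S1 := \sum_(i < n.+1) _; set S2 := \sum_(i < n) _. 
move=> IH. nra.
Qed.

Lemma mval_le n w : mval n <= Gv n w.
Proof. have [sD pD] := Dm_inv n. by rewrite /Gv lerDr psd. Qed.

Lemma qpos t : 0 <= dot (x t.+1) (invmx (Dm t.+1) *m x t.+1).
Proof. have [sD pD] := Dm_inv t.+1; exact: inv_psd. Qed.

Lemma main1 (u : nat -> 'cV[R]_d) T : (1 <= T)%N ->
  laser_loss b c x y T <= b * sqnorm2 (u 1%N) + seq_loss x u y T
    + c * path_variation u T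
    + \sum_(i < T) y i.+1 ^+ 2 * dot (x i.+1) (invmx (Dm i.+1) *m x i.+1).
Proof.
case: T => // T _.
rewrite /laser_loss /seq_loss /path_variation big_add1 /= big_mkord.
rewrite [X in _ <= _ + X + _ + _]big_add1 /= big_mkord.
rewrite [X in _ <= _ + _ + c * X + _]big_add1 /= big_mkord.
have H1 : \sum_(i < T.+1) (y i.+1 - laser_pred b c x y i.+1) ^+ 2 <=
   \sum_(i < T.+1) (mval i.+1 - mval i) + 
   \sum_(i < T.+1) y i.+1 ^+ 2 * dot (x i.+1) (invmx (Dm i.+1) *m x i.+1).
  rewrite -big_split; apply: ler_sum => i _; exact: step_ineq.
have H2 : \sum_(i < T.+1) (mval i.+1 - mval i) = mval T.+1.
  have := @telescope_sumr _ 0 T.+1 mval isT; rewrite big_mkord => ->.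
  by rewrite /= subr0.
have H3 := chain u T.
have H4 := mval_le T.+1 (u T.+1).
rewrite sqnorm_dot.
have -> : \sum_(i < T.+1) (((x i.+1)^T *m u i.+1) 0 0 - y i.+1) ^+ 2 =
  \sum_(i < T.+1) (y i.+1 - dot (x i.+1) (u i.+1)) ^+ 2.
  by apply: eq_bigr => i _; rewrite dot_mx -sqrrN opprB.
have -> : \sum_(i < T) sqnorm2 (u i.+1 - u i.+2) =
  \sum_(i < T) dot (u i.+1 - u i.+2) (u i.+1 - u i.+2).
  by apply: eq_bigr => i _; rewrite sqnorm_dot.
lra.
Qed.


Lemma detpos n (N : 'M[R]_n) : symm N -> posdef N -> 0 < \det N.
Proof. by move=> sN pN; case: (hadamard sN pN). Qed.

Lemma logstep t : dot (x t.+1) (invmx (Dm t.+1) *m x t.+1) <=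
  ln (\det (Dm t.+1)) - ln (\det (Ad t)).
Proof.
have [sD pD] := Dm_inv t.+1.
have dD := detpos sD pD.
have dA := detpos (Ad_sym t) (Ad_pd t).
have u := pd_unit sD pD; rewrite Dm_S' in u.
have E := det_rank1 u; rewrite -(Dm_S' t) in E.
set q := dot _ _ in E *.
have q1 : 0 < 1 - q.
  by move: dA; rewrite E pmulr_rgt0.
rewrite E lnM ?posrE //.
have := @le_ln1Dx R (- q); rewrite -/(1 - q) => /(_ _); lra.
Qed.

Lemma ln_prod_le n (f : 'I_n -> R) : (forall i, 0 <= f i) ->
  ln (\prod_i (1 + f i)) <= \sum_i f i.
Proof.
move=> f0.
have : 0 < \prod_i (1 + f i) <= expR (\sum_i f i).
  apply: (big_ind2 (fun p s => 0 < p <= expR s)).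
  - by rewrite expR0 ltr01 lexx.
  - move=> p1 p2 s1 s2 /andP[h1 h2] /andP[h3 h4]; rewrite expRD mulr_gt0 //=.
    by apply: ler_pM => //; exact: ltW.
  - move=> i _; rewrite expR_ge1Dx andbT; have := f0 i; lra.
case/andP=> h1 h2; rewrite -[X in _ <= X]expRK ler_ln ?posrE ?expR_gt0 //.
Qed.

Lemma logtel j : ln (\det (Dm j)) - ln (\det (Ad j)) <= c^-1 * \tr (Dm j).
Proof.
have [sD pD] := Dm_inv j.
set K := Dm j + c%:M.
have uK : K \in unitmx.
  rewrite unitmxE unitfE gt_eqF // detpos //.
    by rewrite /symm /K linearD /= sD tr_scalar_mx.
  move=> v nz; rewrite /K mulmxDl mul_scalar_mx dotDr dotZr.
  by apply: addr_gt0; [exact: pD | apply: mulr_gt0 => //; exact: dot_gt0].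
have E1 : (c^-1 *: K) *m Ad j = Dm j.
  rewrite /Ad Am_alt // -/K -scalemxAl scalemxAr' scalerA mulVf ?gt_eqF // scale1r.
  by rewrite mulmxA mulmxV // mul1mx.
have E2 : c^-1 *: K = 1%:M + c^-1 *: Dm j.
  by rewrite /K scalerDr scale_scalar_mx mulVf ?gt_eqF // addrC.
have sN : symm (1%:M + c^-1 *: Dm j).
  by rewrite /symm linearD /= linearZ /= sD tr_scalar_mx.
have pN : posdef (1%:M + c^-1 *: Dm j).
  move=> v nz; rewrite mulmxDl mul1mx -scalemxAl dotDr dotZr.
  apply: ltr_pwDl; first exact: dot_gt0.
  by apply: mulr_ge0; [rewrite invr_ge0 ltW | exact: psd].
have [dN1 dN2] := hadamard sN pN.
have dA := detpos (Ad_sym j) (Ad_pd j).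
rewrite -{1}E1 det_mulmx lnM ?posrE // ?E2 // addrK.
apply: (le_trans (y := ln (\prod_i (1%:M + c^-1 *: Dm j) i i))).
  by rewrite ler_ln ?posrE // (lt_le_trans dN1 dN2).
have -> : \prod_i (1%:M + c^-1 *: Dm j) i i = \prod_i (1 + c^-1 * Dm j i i).
  by apply: eq_bigr => i _; rewrite !mxE eqxx mulr1n.
rewrite /mxtrace mulr_sumr; apply: (ln_prod_le (f := fun i => c^-1 * Dm j i i)) => i.
apply: mulr_ge0; first by rewrite invr_ge0 ltW.
have := psd pD (delta_mx i 0).
by rewrite -colE dot_delta mxE.
Qed.

Lemma logsum T : (1 <= T)%N ->
  \sum_(i < T) dot (x i.+1) (invmx (Dm i.+1) *m x i.+1) <=
  ln (\det (b^-1 *: Dm T)) + c^-1 * \sum_(i < T.-1) \tr (Dm i.+1).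
Proof.
case: T => // T _ /=.
apply: (le_trans (y := \sum_(i < T.+1) (ln (\det (Dm i.+1)) - ln (\det (Ad i))))).
  by apply: ler_sum => i _; exact: logstep.
rewrite sumrB big_ord_recr big_ord_recl /= Ad0.
have e1 : \sum_(i < T) ln (\det (Ad (bump 0 i))) = \sum_(i < T) ln (\det (Ad i.+1)).
  by apply: eq_bigr => i _; rewrite /bump leq0n add1n.
have [sD pD] := Dm_inv T.+1.
have dD := detpos sD pD.
have bd0 : 0 < b ^+ d by rewrite exprn_gt0.
have e2 : ln (\det (b^-1 *: Dm T.+1)) = ln (\det (Dm T.+1)) - ln (\det (b%:M : 'M[R]_d)).
  rewrite detZ det_scalar lnM ?posrE ?exprn_gt0 ?invr_gt0 // exprVn lnV ?posrE //.
  by rewrite addrC.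
have e3 : \sum_(i < T) ln (\det (Dm i.+1)) - \sum_(i < T) ln (\det (Ad i.+1)) <=
   c^-1 * \sum_(i < T) \tr (Dm i.+1).
  rewrite -sumrB mulr_sumr; apply: ler_sum => i _; exact: logtel.
rewrite e1 e2; lra.
Qed.

Lemma scalar_fact (X M : R) : 0 < X ->
  (3 * X ^+ 2 + Num.sqrt (X ^+ 4 + 4 * X ^+ 2 * c)) / 2 <= M ->
  c * M / (M + c) + X ^+ 2 <= M.
Proof.
move=> X0 HM.
set s := Num.sqrt _ in HM.
have s0 : 0 <= s by exact: sqrtr_ge0.
have s2 : s ^+ 2 = X ^+ 4 + 4 * X ^+ 2 * c.
  rewrite sqr_sqrtr //; apply: addr_ge0; first exact: exprn_ge0 (ltW X0).
  by apply: mulr_ge0; [apply: mulr_ge0 => //; exact: sqr_ge0 | exact: ltW].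
have X2 : 0 < X ^+ 2 by exact: exprn_gt0.
have M0 : 0 < M by lra.
have Mc : M + c != 0 by rewrite gt_eqF // addr_gt0.
have P : 0 <= M ^+ 2 - X ^+ 2 * M - X ^+ 2 * c.
  have -> : M ^+ 2 - X ^+ 2 * M - X ^+ 2 * c =
     (M - (X ^+ 2 + s) / 2) * (M - (X ^+ 2 - s) / 2).
    have -> : X ^+ 2 * c = (s ^+ 2 - X ^+ 4) / 4 by rewrite s2; field.
    by field.
  apply: mulr_ge0; lra.
rewrite -subr_ge0.
have -> : M - (c * M / (M + c) + X ^+ 2) = (M ^+ 2 - X ^+ 2 * M - X ^+ 2 * c) / (M + c).
  by field.
by apply: divr_ge0 => //; apply: ltW; apply: addr_gt0.
Qed.

Lemma loewner (X : R) T : 0 < X ->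
  (forall t, (1 <= t <= T)%N -> sqnorm2 (x t) <= X ^+ 2) ->
  let M := Num.max ((3 * X ^+ 2 + Num.sqrt (X ^+ 4 + 4 * X ^+ 2 * c)) / 2) (b + X ^+ 2) in
  forall j, (j.+1 <= T)%N -> forall v, dot v (Dm j.+1 *m v) <= M * dot v v.
Proof.
move=> X0 Hx M.
have M1 : (3 * X ^+ 2 + Num.sqrt (X ^+ 4 + 4 * X ^+ 2 * c)) / 2 <= M by rewrite le_max lexx.
have M2 : b + X ^+ 2 <= M by rewrite le_max lexx orbT.
have xb j v : (j.+1 <= T)%N -> dot v ((x j.+1 *m (x j.+1)^T) *m v) <= X ^+ 2 * dot v v.
  move=> jT; rewrite rank1_mul dotZr (dotC v) -expr2.
  apply: (le_trans (cauchy_schwarz _ _)); apply: ler_wpM2r; first exact: dot_ge0.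
  by rewrite -sqnorm_dot; apply: Hx; rewrite ltn0Sn.
clearbody M.
have M0 : 0 < M by apply: lt_le_trans M2; apply: addr_gt0 => //; exact: exprn_gt0.
elim=> [|j IH] jT v.
  rewrite Dm_S' Ad0 mulmxDl dotDr mul_scalar_mx dotZr.
  have := xb 0%N v jT; have := dot_ge0 v; nra.
have [sD pD] := Dm_inv j.+1.
have IH' := IH (ltnW jT).
have HA := Am_le c0 sD pD M0 IH' v.
rewrite Dm_S' mulmxDl dotDr.
have := xb j.+1 v jT.
have := scalar_fact X0 M1.
rewrite -/(Ad j.+1) in HA.
have := dot_ge0 v. nra.
Qed.

Lemma part1 (T : nat) (X Y : R) (u : nat -> 'cV[R]_d) : (1 <= T)%N -> 0 < X -> 0 <= Y ->
  (forall t, (1 <= t <= T)%N -> sqnorm2 (x t) <= X ^+ 2) ->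
  (forall t, (1 <= t <= T)%N -> `|y t| <= Y) ->
  laser_loss b c x y T <= b * sqnorm2 (u 1%N) + seq_loss x u y T
    + Y ^+ 2 * ln (\det (b^-1 *: laserD b c x y T))
    + c^-1 * Y ^+ 2 * \tr (D0 d b c) + c * path_variation u T
    + c^-1 * Y ^+ 2 * T%:R * d%:R *
      Num.max ((3 * X ^+ 2 + Num.sqrt (X ^+ 4 + 4 * X ^+ 2 * c)) / 2) (b + X ^+ 2).
Proof.
move=> hT X0 Y0 Hx Hy.
have H1 := main1 u hT.
have HL := logsum hT.
have LW := loewner X0 Hx.
set M := Num.max _ _ in LW *.
have M0 : 0 <= M by rewrite le_max; apply/orP; right; apply: addr_ge0; [exact: ltW | exact: sqr_ge0].
clearbody M.
set Q := \sum_(i < T) dot _ _ in HL.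
have HQ : \sum_(i < T) y i.+1 ^+ 2 * dot (x i.+1) (invmx (Dm i.+1) *m x i.+1) <= Y ^+ 2 * Q.
  rewrite /Q mulr_sumr; apply: ler_sum => i _; apply: ler_wpM2r; first exact: qpos.
  have := Hy i.+1 (ltn_ord i); rewrite ler_norml => /andP[h1 h2]; nra.
have Htr : \sum_(i < T.-1) \tr (Dm i.+1) <= T%:R * d%:R * M.
  apply: (le_trans (y := \sum_(i < T.-1) (M * d%:R))).
    apply: ler_sum => i _; apply: trace_le; apply: LW.
    exact: leq_trans (ltn_ord i) (leq_pred T).
  rewrite sumr_const card_ord -[X in X <= _]mulr_natr.
  have w0 : 0 <= M * d%:R by rewrite mulr_ge0.
  rewrite (_ : T%:R * d%:R * M = M * d%:R * T%:R); last by ring.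
  by apply: ler_wpM2l => //; rewrite ler_nat leq_pred.
have D00 : 0 <= \tr (D0 d b c) by rewrite /D0 mxtrace_scalar mulrn_wge0 // ltW.
have ci : 0 <= c^-1 by rewrite invr_ge0 ltW.
set Tr := \sum_(i < T.-1) _ in HL Htr.
have E1 : Y ^+ 2 * Q <= Y ^+ 2 * ln (\det (b^-1 *: Dm T)) + c^-1 * Y ^+ 2 * Tr.
  have := ler_wpM2l (sqr_ge0 Y) HL; rewrite mulrDr; lra.
have E2 : c^-1 * Y ^+ 2 * Tr <= c^-1 * Y ^+ 2 * \tr (D0 d b c) + c^-1 * Y ^+ 2 * T%:R * d%:R * M.
  rewrite -!(mulrA (c^-1 * Y ^+ 2)) -mulrDr; apply: ler_wpM2l.
    by apply: mulr_ge0 => //; exact: sqr_ge0.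
  rewrite ?mulrA; lra.
move: H1 HQ E1 E2. rewrite -/(Dm T). lra.
Qed.

End Laser.


Lemma sq_le (R : realType) (a b : R) : 0 <= b -> a ^+ 2 <= b ^+ 2 -> a <= b.
Proof. move=> b0 h; nra. Qed.

Lemma scalar_part (R : realType) (b c X q : R) :
  0 < X -> 0 < q -> c = q ^+ 2 ->
  9 / 8 * X ^+ 2 <= c -> (b + X ^+ 2) ^+ 2 / (8 * X ^+ 2) <= c -> 0 <= b ->
  Num.max ((3 * X ^+ 2 + Num.sqrt (X ^+ 4 + 4 * X ^+ 2 * c)) / 2) (b + X ^+ 2)
   <= 2 * Num.sqrt 2 * X * q.
Proof.
move=> X0 q0 cE h1 h2 b0.
set s2 := Num.sqrt 2.
have s20 : 0 < s2 by rewrite sqrtr_gt0.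
have s22 : s2 ^+ 2 = 2 by rewrite sqr_sqrtr.
set w := s2 * X * q.
have w0 : 0 < w by rewrite /w !mulr_gt0.
have w2 : w ^+ 2 = 2 * X ^+ 2 * q ^+ 2 by rewrite /w !exprMn s22.
have X2 : 0 < X ^+ 2 by exact: exprn_gt0.
rewrite ge_max; apply/andP; split.
  set S := Num.sqrt _.
  have S0 : 0 <= S := sqrtr_ge0 _.
  have S2 : S ^+ 2 = X ^+ 4 + 4 * X ^+ 2 * c.
    rewrite sqr_sqrtr //; apply: addr_ge0; first exact: exprn_ge0 (ltW X0).
    rewrite cE; apply: mulr_ge0; [apply: mulr_ge0 => //; exact: ltW|exact: sqr_ge0].
  have hw : 3 / 2 * X ^+ 2 <= w.
    apply: sq_le; first exact: ltW.
    rewrite w2 -cE; have -> : (3 / 2 * X ^+ 2) ^+ 2 = 9 / 4 * X ^+ 2 * X ^+ 2 by field.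
    have := ler_wpM2l (ltW X2) h1; nra.
  have hS : S <= 4 * w - 3 * X ^+ 2.
    apply: sq_le; first lra.
    rewrite S2 cE.
    have -> : X ^+ 4 + 4 * X ^+ 2 * q ^+ 2 = X ^+ 2 * X ^+ 2 + 2 * w ^+ 2.
      by rewrite w2; ring.
    have : 0 <= (w - 3 / 2 * X ^+ 2) * (7 * w - 3 / 2 * X ^+ 2).
      by apply: mulr_ge0; lra.
    nra.
  have -> : 2 * s2 * X * q = 2 * w by rewrite /w; ring.
  lra.
have -> : 2 * s2 * X * q = 2 * w by rewrite /w; ring.
apply: sq_le; first lra.
have : (b + X ^+ 2) ^+ 2 <= 8 * X ^+ 2 * c.
  by move: h2; rewrite ler_pdivrMr ?mulr_gt0 // mulrC.
rewrite cE exprMn w2; lra.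
Qed.


End LaserProof.
Import LaserProof.

Theorem corollary8 (R : realType) (d T : nat) (b c X Y : R)
  (x : nat -> 'cV[R]_d) (y : nat -> R) :
  (1 <= d)%N -> (1 <= T)%N -> 0 < b -> b < c -> 0 < X -> 0 <= Y ->
  (forall t, (1 <= t <= T)%N -> sqnorm2 (x t) <= X ^+ 2) ->
  (forall t, (1 <= t <= T)%N -> `|y t| <= Y) ->
  forall u : nat -> 'cV[R]_d,
  let V := path_variation u T in
  let LL := laser_loss b c x y T in
  let Lu := seq_loss x u y T in
  let logdet := ln (\det (b^-1 *: laserD b c x y T)) in
  (LL <= b * sqnorm2 (u 1%N) + Lu + Y ^+ 2 * logdet
         + c^-1 * Y ^+ 2 * \tr (D0 d b c) + c * V
         + c^-1 * Y ^+ 2 * T%:R * d%:R *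
           Num.max ((3 * X ^+ 2 + Num.sqrt (X ^+ 4 + 4 * X ^+ 2 * c)) / 2)
                   (b + X ^+ 2))
  /\
  (forall eps : R, 0 < eps -> eps < 1 -> b = eps * c ->
   let mu := Num.max (9 / 8 * X ^+ 2) ((b + X ^+ 2) ^+ 2 / (8 * X ^+ 2)) in
   0 < V ->
   V <= T%:R * (Num.sqrt 2 * Y ^+ 2 * d%:R * X) / powR mu (3 / 2) ->
   c = powR (Num.sqrt 2 * T%:R * Y ^+ 2 * d%:R * X / V) (2 / 3) ->
   LL <= b * sqnorm2 (u 1%N)
         + 3 * powR (Num.sqrt 2 * Y ^+ 2 * d%:R * X) (2 / 3)
             * powR T%:R (2 / 3) * powR V (1 / 3)
         + eps / (1 - eps) * Y ^+ 2 * d%:R + Lu + Y ^+ 2 * logdet).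
Proof.
move=> d1 T1 b0 bc X0 Y0 Hx Hy u V LL Lu logdet.
have P1 := part1 b0 bc u T1 X0 Y0 Hx Hy.
rewrite -/V -/LL -/Lu -/logdet in P1.
split; first by lra.
move=> eps e0 e1 bE mu V0 Vle cE.
have c0 : 0 < c by exact: lt_trans bc.
set Max := Num.max _ _ in P1.
set Z := Num.sqrt 2 * T%:R * Y ^+ 2 * d%:R * X.
have Z0 : 0 <= Z.
  rewrite /Z !mulr_ge0 ?sqrtr_ge0 ?sqr_ge0 ?ler0n //; exact: ltW.
have ZV0 : 0 <= Z / V by rewrite divr_ge0 // ltW.
have ZVp : 0 < Z / V.
  have t0 : (2 / 3 : R) != 0 by rewrite gt_eqF // divr_gt0.
  rewrite lt_def ZV0 andbT; apply/eqP => h; move: cE; rewrite h powR0 //.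
  by move=> c00; move: c0; rewrite c00 ltxx.
set q := powR (Z / V) (1 / 3).
have q0 : 0 < q by exact: powR_gt0.
have cq : c = q ^+ 2.
  by rewrite -(@powR_mulrn _ q 2) ?ltW // cE -/Z /q -powRrM; congr powR; field.
have q3 : q ^+ 3 = Z / V.
  rewrite -(@powR_mulrn _ q 3) ?ltW // /q -powRrM.
  by rewrite (_ : 1 / 3 * 3%:R = 1) ?powRr1 //; field.
have X2 : 0 < X ^+ 2 by exact: exprn_gt0.
have mu0 : 0 < mu.
  rewrite /mu lt_max; apply/orP; left; apply: mulr_gt0 => //.
set r := powR mu (1 / 2).
have r0 : 0 < r by exact: powR_gt0.
have r2 : r ^+ 2 = mu.
  rewrite -(@powR_mulrn _ r 2) ?ltW // /r -powRrM.
  by rewrite (_ : 1 / 2 * 2%:R = 1) ?powRr1 ?ltW //; field.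
have r3 : powR mu (3 / 2) = r ^+ 3.
  by rewrite -(@powR_mulrn _ r 3) ?ltW // /r -powRrM; congr powR; field.
have muc : mu <= c.
  have h : r ^+ 3 <= q ^+ 3.
    rewrite q3 ler_pdivlMr // mulrC -ler_pdivlMr ?exprn_gt0 //.
    by move: Vle; rewrite r3 (_ : T%:R * _ = Z) //; rewrite /Z; ring.
  have h' : r <= q.
    by move: h; rewrite ler_pXn2r // nnegrE ltW.
  by rewrite -r2 cq ler_pXn2r // nnegrE ltW.
have hM : Max <= 2 * Num.sqrt 2 * X * q.
  apply: scalar_part => //; last exact: ltW.
    by apply: le_trans muc; rewrite /mu le_max lexx.
  by apply: le_trans muc; rewrite /mu le_max lexx orbT.
have V0' : V != 0 by rewrite gt_eqF.
have e10 : 1 - eps != 0 by rewrite gt_eqF // subr_gt0.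
have cn0 : c != 0 by rewrite gt_eqF.
have hA : c^-1 * Y ^+ 2 * \tr (D0 d b c) = eps / (1 - eps) * Y ^+ 2 * d%:R.
  rewrite /D0 mxtrace_scalar -[_ *+ d]mulr_natr bE.
  have : c - eps * c != 0.
    rewrite (_ : c - eps * c = c * (1 - eps)); last by ring.
    by rewrite mulf_neq0.
  by move=> h; field; rewrite e10 h cn0.
have hP : powR (Num.sqrt 2 * Y ^+ 2 * d%:R * X) (2 / 3) * powR T%:R (2 / 3)
          * powR V (1 / 3) = c * V.
  have g0 : 0 <= Num.sqrt 2 * Y ^+ 2 * d%:R * X.
    by rewrite !mulr_ge0 ?sqrtr_ge0 ?sqr_ge0 ?ler0n //; exact: ltW.
  rewrite -powRM ?ler0n //.
  have -> : Num.sqrt 2 * Y ^+ 2 * d%:R * X * T%:R = Z / V * V.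
    by rewrite /Z; field.
  rewrite powRM // ?ltW // (_ : (Z / V) `^ (2 / 3) = c); last by rewrite cE.
  rewrite -mulrA -powRD; last by rewrite V0' implybT.
  by rewrite (_ : 2 / 3 + 1 / 3 = 1) ?powRr1 ?ltW //; field.
have hB : c^-1 * Y ^+ 2 * T%:R * d%:R * Max <= 2 * c * V.
  have f0 : 0 <= c^-1 * Y ^+ 2 * T%:R * d%:R.
    have ci : 0 <= c^-1 by rewrite invr_ge0 ltW.
    by rewrite !mulr_ge0 ?sqr_ge0 ?ler0n.
  apply: (le_trans (ler_wpM2l f0 hM)).
  have ZE : Z = q ^+ 3 * V by rewrite q3; field.
  have -> : c^-1 * Y ^+ 2 * T%:R * d%:R * (2 * Num.sqrt 2 * X * q) = 2 * q * Z / q ^+ 2.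
    by rewrite /Z cq; field; rewrite gt_eqF.
  rewrite ZE cq le_eqVlt; apply/orP; left; apply/eqP; field.
  by rewrite gt_eqF.
set pa := powR _ (2 / 3) in hP *.
set pb := powR T%:R (2 / 3) in hP *.
set pc := powR V (1 / 3) in hP *.
have -> : 3 * pa * pb * pc = 3 * (c * V) by rewrite -hP; ring.
move: P1 hA hB; set A := c^-1 * Y ^+ 2 * \tr (D0 d b c).
set B := c^-1 * Y ^+ 2 * T%:R * d%:R * Max.
set E := eps / (1 - eps) * Y ^+ 2 * d%:R.
move=> P1 hA hB; lra.
Qed.
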